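(* Fix integers $p\ge 3$, $q\ge 1$ and a real $\eta$ with $0<\eta<\frac{1}{7p^5q}$. For all sufficiently large $n$, for the graph $G$ described in the context, the set $S=\{v\in V(G): d_G(v)\le (\frac{p-1}{p}-5\eta)n\}$ satisfies $|S|\le \eta n$.
   Context: $B_{p,q}=K_p\nabla qK_1$ is the join of a clique $K_p$ and an independent set of $q$ vertices. $\mathcal{G}(n,p,q)$ is the set of $n$-vertex graphs with chromatic number greater than $p$ that contain no subgraph isomorphic to $B_{p,q}$ and have the maximum number of edges among all such graphs. $G$ is a graph in $\mathcal{G}(n,p,q)$ whose minimum degree equals $\min_{F\in\mathcal{G}(n,p,q)}\delta(F)$. $d_G(v)$ is the degree of $v$ in $G$. *)

(* Defs.v *)
From mathcomp Require Import all_boot all_order all_algebra.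
From mathcomp Require Import reals.
Set Implicit Arguments. Unset Strict Implicit. Unset Printing Implicit Defensive.

Definition simple_graph (T : finType) (g : rel T) : Prop :=
  (forall x, ~~ g x x) /\ (forall x y, g x y = g y x).

Definition n_edges (n : nat) (g : rel 'I_n) : nat :=
  #|[set e : 'I_n * 'I_n | (val e.1 < val e.2)%N && g e.1 e.2]|.

Definition deg (T : finType) (g : rel T) (v : T) : nat := #|[set u | g v u]|.

(* minimum degree (the default n is irrelevant for n > 0, as degrees are < n) *)
Definition mindeg (n : nat) (g : rel 'I_n) : nat :=
  \big[minn/n]_(v : 'I_n) deg g v.

Definition colorable (T : finType) (g : rel T) (k : nat) : Prop :=
  exists c : T -> 'I_k, forall x y, g x y -> c x != c y.

Definition chi_gt (T : finType) (g : rel T) (p : nat) : Prop := ~ colorable g p.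

(* B_{p,q} = K_p join (q K_1) on vertex set 'I_p + 'I_q *)
Definition B_adj (p q : nat) : rel ('I_p + 'I_q)%type :=
  fun x y => match x, y with
             | inl i, inl j => i != j
             | inl _, inr _ => true
             | inr _, inl _ => true
             | inr _, inr _ => false
             end.

Definition contains_subgraph (TH TG : finType) (h : rel TH) (g : rel TG) : Prop :=
  exists f : TH -> TG, injective f /\ forall x y, h x y -> g (f x) (f y).

Definition admissible (n p q : nat) (g : rel 'I_n) : Prop :=
  simple_graph g /\ chi_gt g p /\ ~ contains_subgraph (@B_adj p q) g.

Definition in_calG (n p q : nat) (g : rel 'I_n) : Prop :=
  admissible p q g /\ forall f : rel 'I_n, admissible p q f -> (n_edges f <= n_edges g)%N.

(* Main.v *)
Require Import Defs.
From mathcomp Require Import all_boot all_order all_algebra.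
From mathcomp Require Import reals.
From mathcomp Require Import zify ring lra.
Import Order.TTheory GRing.Theory Num.Theory.
Set Implicit Arguments. Unset Strict Implicit. Unset Printing Implicit Defensive.

Definition dU (n : nat) (g : rel 'I_n) (U : {set 'I_n}) (v : 'I_n) : nat :=
  \sum_(u in U) nat_of_bool (g v u).
Definition ds (n : nat) (g : rel 'I_n) (U : {set 'I_n}) : nat :=
  \sum_(v in U) dU g U v.

Lemma card_set_sum (T : finType) (P : pred T) : #|[set x | P x]| = \sum_x P x.
Proof.
rewrite -sum1_card big_mkcond; apply: eq_bigr => x _; rewrite inE; by case: (P x).
Qed.

Lemma deg_dU n (g : rel 'I_n) v : deg g v = dU g setT v.
Proof.
rewrite /deg /dU card_set_sum; apply: eq_bigl => u; by rewrite inE.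
Qed.

Lemma n_edges_ds n (g : rel 'I_n) : simple_graph g -> (2 * n_edges g = ds g setT)%N.
Proof.
move=> [irr sym].
have E : n_edges g = \sum_x \sum_y nat_of_bool ((val x < val y)%N && g x y).
  rewrite /n_edges card_set_sum pair_big /=; by [].
have E2 : n_edges g = \sum_x \sum_y nat_of_bool ((val y < val x)%N && g y x).
  by rewrite E exchange_big.
rewrite mul2n -addnn {1}E E2 -big_split /= /ds.
apply: eq_big => [x|x _]; first by rewrite inE.
rewrite /dU -big_split /=; apply: eq_big => [y|y _]; first by rewrite inE.
rewrite (sym y x); case: (ltngtP (val x) (val y)) => h /=; rewrite ?addn0 //.
have -> : x = y by apply: val_inj.
by rewrite (negbTE (irr y)).
Qed.

Lemma ds_remove n (g : rel 'I_n) (U T : {set 'I_n}) : simple_graph g ->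
  (ds g U <= ds g (U :\: T) + 2 * \sum_(t in U :&: T) dU g U t)%N.
Proof.
move=> [irr sym].
rewrite {1}/ds (big_setID T) /=.
set A := \sum_(i in U :&: T) dU g U i.
suff h : (\sum_(i in U :\: T) dU g U i <= ds g (U :\: T) + A)%N.
  clearbody A; move: h; set B := \sum_(i in U :\: T) _; set D := ds _ _; lia.
have H1 : forall v, dU g U v = (\sum_(u in U :&: T) nat_of_bool (g v u) + dU g (U :\: T) v)%N.
  move=> v; by rewrite /dU (big_setID T).
rewrite (eq_bigr _ (fun v _ => H1 v)) big_split /= addnC leq_add2l /A.
apply: (@leq_trans (\sum_(v in U) \sum_(u in U :&: T) nat_of_bool (g v u))).
  rewrite [X in (_ <= X)%N](big_setID T) /=; exact: leq_addl.
rewrite exchange_big /=; apply: leq_sum => u _; rewrite /dU.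
by under eq_bigr => v _ do rewrite sym.
Qed.

Lemma card_setin_sum (T : finType) (U : {set T}) (P : pred T) :
  #|[set x in U | P x]| = \sum_(x in U) P x.
Proof.
rewrite -sum1_card big_mkcond [RHS]big_mkcond; apply: eq_bigr => x _; rewrite inE.
by case: (x \in U); case: (P x).
Qed.

Section Greedy.
Local Open Scope ring_scope.

Lemma greedy (R : realType) n (g : rel 'I_n) (U : {set 'I_n}) (c : R) (j : nat) :
  simple_graph g ->
  (forall v, v \in U -> c * #|U|%:R <= (dU g U v)%:R) ->
  (forall i, (i < j)%N -> 0 < #|U|%:R * (1 - i%:R * (1 - c))) ->
  exists s : seq 'I_n, [/\ size s = j, uniq s, {subset s <= U},
     (forall x y, x \in s -> y \in s -> x != y -> g x y) &
     #|U|%:R * (1 - j%:R * (1 - c)) <= #|[set u in U | all (fun x => g x u) s]|%:R ].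
Proof.
move=> [irr sym] hdeg; elim: j => [|j IH] hpos.
  exists [::]; split => //.
  rewrite mul0r subr0 mulr1 ler_nat; apply: subset_leq_card; apply/subsetP => x.
  by rewrite inE => ->.
have [s [hs hu hsub hcl hW]] := IH (fun i hi => hpos i (ltnW hi)).
set W := [set u in U | all (fun x => g x u) s] in hW.
have : (0 < #|W|)%N.
  rewrite -(ltr_nat R); apply: lt_le_trans hW; exact: hpos.
case/card_gt0P => x xW.
have := xW; rewrite inE => /andP [xU xall].
have xs : x \notin s.
  apply/negP => xs; move/allP: xall => /(_ x xs); by rewrite (negbTE (irr x)).
exists (x :: s); split.
- by rewrite /= hs.
- by rewrite /= xs hu.
- by move=> y; rewrite inE => /orP [/eqP ->|/hsub].
- move=> y z; rewrite !inE => /orP [/eqP ->|ys] /orP [/eqP ->|zs].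
  + by rewrite eqxx.
  + move=> _; rewrite sym; by move/allP: xall => /(_ z zs).
  + by move=> _; move/allP: xall => /(_ y ys).
  + exact: hcl.
set N := [set u in U | g x u].
have -> : [set u in U | all (fun z => g z u) (x :: s)] = W :&: N.
  apply/setP => u; rewrite !inE /=; by case: (u \in U); case: (g x u); case: (all _ s).
have hN : c * #|U|%:R <= #|N|%:R by rewrite /N card_setin_sum; exact: hdeg.
have hWN : (#|W :|: N| <= #|U|)%N.
  apply: subset_leq_card; apply/subsetP => u; rewrite !inE.
  by case/orP => /andP [].
have := cardsUI W N.
move=> /(congr1 (fun m => m%:R : R)); rewrite !natrD => hUI.
have hWN' : (#|W :|: N|%:R <= #|U|%:R :> R) by rewrite ler_nat.
rewrite -natr1.
have : (#|W|%:R + #|N|%:R - #|U|%:R <= #|W :&: N|%:R :> R) by lra.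
move: hW hN; set w := #|W|%:R; set m := #|N|%:R; set u := #|U|%:R; move=> hW hN h.
apply: le_trans h; rewrite -/u in hW hN; nra.
Qed.

End Greedy.

Lemma contains_B n p q (g : rel 'I_n) (s : seq 'I_n) (W : {set 'I_n}) (x0 : 'I_n) :
  simple_graph g -> size s = p -> uniq s ->
  (forall x y, x \in s -> y \in s -> x != y -> g x y) ->
  (q <= #|W|)%N -> (forall w, w \in W -> all (fun x => g x w) s) ->
  contains_subgraph (@B_adj p q) g.
Proof.
move=> [irr sym] hs hu hcl hq hW.
have hsW : forall i (w : 'I_n), (i < p)%N -> w \in W -> g (nth x0 s i) w.
  move=> i w hi /hW /allP; apply; by rewrite mem_nth // hs.
have hE : size (enum W) = #|W| by rewrite cardE.
exists (fun z : ('I_p + 'I_q)%type => match z with inl i => nth x0 s i | inr k => nth x0 (enum W) k end).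
split.
- case=> [i|k] [j|l] /=.
  + move/eqP; rewrite nth_uniq ?hs // => /eqP h; congr inl; exact: val_inj.
  + move=> h; have := hsW i (nth x0 (enum W) l) (ltn_ord i).
    rewrite -mem_enum mem_nth ?hE; last exact: leq_trans (ltn_ord l) hq.
    by rewrite h (negbTE (irr _)) => /(_ isT).
  + move=> h; have := hsW j (nth x0 (enum W) k) (ltn_ord j).
    rewrite -mem_enum mem_nth ?hE; last exact: leq_trans (ltn_ord k) hq.
    by rewrite h (negbTE (irr _)) => /(_ isT).
  + move/eqP; rewrite nth_uniq ?hE ?enum_uniq //; try exact: leq_trans (ltn_ord _) hq.
    move=> /eqP h; congr inr; exact: val_inj.
- case=> [i|k] [j|l] //= h.
  + apply: hcl; rewrite ?mem_nth ?hs //.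
    by rewrite nth_uniq ?hs.
  + apply: hsW => //; rewrite -mem_enum mem_nth // hE; exact: leq_trans (ltn_ord l) hq.
  + rewrite sym; apply: hsW => //; rewrite -mem_enum mem_nth // hE; exact: leq_trans (ltn_ord k) hq.
Qed.

Section Pot.
Local Open Scope ring_scope.

Definition Phi (R : realType) n (g : rel 'I_n) (c : R) (U : {set 'I_n}) : R :=
  (ds g U)%:R - c * #|U|%:R ^+ 2 - c * #|U|%:R.

Lemma ds_remove1 n (g : rel 'I_n) (U : {set 'I_n}) v : simple_graph g -> v \in U ->
  (ds g U <= ds g (U :\ v) + 2 * dU g U v)%N.
Proof.
move=> hg vU; have := ds_remove U [set v] hg.
have -> : U :&: [set v] = [set v].
  apply/setP => x; rewrite !inE; case: eqP => [->|]; by rewrite ?andbF ?vU.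
by rewrite big_set1.
Qed.

Lemma mindeg_sub (R : realType) n (g : rel 'I_n) (c : R) (X : R) :
  simple_graph g -> forall U, X <= Phi g c U ->
  exists U' : {set 'I_n}, [/\ U' \subset U, X <= Phi g c U' &
     forall v, v \in U' -> c * #|U'|%:R <= (dU g U' v)%:R].
Proof.
move=> hg U; move: {2}#|U| (leqnn #|U|) => k; elim: k U => [|k IH] U hk hX.
  exists U; split => // v vU; move: hk; rewrite leqn0 => /eqP/cards0_eq hU; by rewrite hU inE in vU.
case: (boolP [exists v in U, (dU g U v)%:R < c * #|U|%:R]).
  case/exists_inP => v vU hv.
  have hc : #|U| = (#|U :\ v|).+1 by rewrite (cardsD1 v U) vU.
  have := IH (U :\ v); rewrite -ltnS -hc => /(_ hk).
  case.
    apply: (le_trans hX); rewrite /Phi.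
    have h := ds_remove1 hg vU; rewrite -(ler_nat R) natrD natrM in h.
    rewrite hc -natr1.
    move: h hv; rewrite hc -natr1.
    set a := (ds g U)%:R; set b := (ds g (U :\ v))%:R; set d := (dU g U v)%:R;
      set u := #|U :\ v|%:R => h hv.
    nra.
  move=> U' [h1 h2 h3]; exists U'; split => //.
  apply: (subset_trans h1); exact: subsetDl.
rewrite negb_exists_in => /forall_inP hall.
exists U; split => // v vU; have := hall v vU; by rewrite -leNgt.
Qed.

End Pot.

Definition lab (p i : nat) : nat := if (i < 3)%N then i else 3 + i %% p.
Definition c5 (x y : nat) : bool := (x.+1 %% 5 == y) || (y.+1 %% 5 == x).
Definition adjL (x y : nat) : bool := if (x < 5) && (y < 5) then c5 x y else x != y.
Definition Fg (n p : nat) : rel 'I_n := fun i j => adjL (lab p i) (lab p j).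
Arguments Fg : clear implicits.

Lemma adjL_irr x : adjL x x = false.
Proof. rewrite /adjL /c5 eqxx andbb orbb; by case: x => [|[|[|[|[|x]]]]]. Qed.

Lemma adjL_sym x y : adjL x y = adjL y x.
Proof. rewrite /adjL andbC; case: ifP => _; [by rewrite /c5 orbC | by rewrite eq_sym]. Qed.

Lemma Fg_simple n p : simple_graph (Fg n p).
Proof. split => [x|x y]; by rewrite /Fg ?adjL_irr // adjL_sym. Qed.

Lemma c5_tri x y z : (x < 5)%N -> (y < 5)%N -> (z < 5)%N ->
  c5 x y -> c5 y z -> c5 x z -> False.
Proof.
by do 5?[case: x => [|x]] => //; do 5?[case: y => [|y]] => //; do 5?[case: z => [|z]].
Qed.

Lemma adjL_parts r r' : r != r' -> adjL (3 + r) (3 + r').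
Proof.
rewrite /adjL; case: ifP => [/andP [h1 h2]|_] hr; last by rewrite eqn_add2l.
by case: r h1 hr => [|[|r]] //; case: r' h2 => [|[|r']].
Qed.

Lemma adjL_0 r : r != 0 -> adjL 0 (3 + r).
Proof. by case: r => [|[|r]]. Qed.
Lemma adjL_2 r : r != 1 -> adjL 2 (3 + r).
Proof. by case: r => [|[|r]]. Qed.
Lemma adjL_1 r : (2 <= r)%N -> adjL 1 (3 + r).
Proof. by case: r => [|[|r]]. Qed.

Lemma lab_big p i : (3 <= i)%N -> lab p i = 3 + i %% p.
Proof. move=> h; rewrite /lab; case: ifP => // h'; lia. Qed.

Lemma Fg_chi n p : (3 <= p)%N -> (2 * p <= n)%N -> chi_gt (Fg n p) p.
Proof.
move=> hp hn [col hcol].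
have vlt : forall r : 'I_p, (p + r < n)%N.
  move=> r; have := ltn_ord r; lia.
pose v := fun r : 'I_p => Ordinal (vlt r).
have labv : forall r : 'I_p, lab p (v r) = 3 + r.
  move=> r; rewrite lab_big /=; last by lia.
  by rewrite modnDl modn_small.
pose phi := fun r => col (v r).
have phi_inj : injective phi.
  move=> r r' h; apply/eqP; apply/negPn/negP => hr.
  have := hcol (v r) (v r'); rewrite /Fg !labv adjL_parts; last first.
    by apply: contra hr => /eqP h'; apply/eqP; apply: val_inj.
  by move=> /(_ isT); rewrite /phi in h; rewrite h eqxx.
have [ginv hg1 hg2] := injF_bij phi_inj.
have key : forall x r0, (forall r, r != r0 -> Fg n p x (v r)) -> col x = phi r0.
  move=> x r0 hx; have e : phi (ginv (col x)) = col x by rewrite hg2.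
  case: (eqVneq (ginv (col x)) r0) => [<-|hne]; first by rewrite e.
  have := hcol _ _ (hx _ hne); by rewrite -/(phi _) e eqxx.
have h0 : (0 < n)%N by lia.
have h1 : (1 < n)%N by lia.
have h2 : (2 < n)%N by lia.
pose c := Ordinal h0; pose d := Ordinal h1; pose e := Ordinal h2.
have p0 : (0 < p)%N by lia.
have p1 : (1 < p)%N by lia.
pose r0 := Ordinal p0; pose r1 := Ordinal p1.
have hc : col c = phi r0.
  apply: key => r hr; rewrite /Fg labv /lab /=; apply: adjL_0.
  by apply: contra hr => /eqP h'; apply/eqP; apply: val_inj.
have he : col e = phi r1.
  apply: key => r hr; rewrite /Fg labv /lab /=; apply: adjL_2.
  by apply: contra hr => /eqP h'; apply/eqP; apply: val_inj.
have ed : phi (ginv (col d)) = col d by rewrite hg2.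
case: (eqVneq (ginv (col d)) r0) => [h|h].
  have := hcol d c; rewrite /Fg /lab /= => /(_ isT).
  by rewrite hc -ed h eqxx.
case: (eqVneq (ginv (col d)) r1) => [h'|h'].
  have := hcol d e; rewrite /Fg /lab /= => /(_ isT).
  by rewrite he -ed h' eqxx.
have := hcol d (v (ginv (col d))); rewrite /Fg labv /lab /= adjL_1.
  by move=> /(_ isT); rewrite -/(phi _) ed eqxx.
move: (ginv (col d)) h h' => [r rlt] hr hr' /=.
have : r != 0 by apply: contra hr => /eqP hh; apply/eqP/val_inj.
have : r != 1 by apply: contra hr' => /eqP hh; apply/eqP/val_inj.
lia.
Qed.

Lemma label_clique p (t : seq nat) : (3 <= p)%N -> uniq t ->
  (forall x y, x \in t -> y \in t -> x != y -> adjL x y) ->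
  (forall x, x \in t -> (x < p + 3)%N) -> (size t <= p)%N.
Proof.
move=> hp ut hcl hlt.
rewrite -(count_predC (fun x => x < 5)%N t).
have c1 : (count (fun x => x < 5)%N t <= 2)%N.
  rewrite -size_filter.
  have : uniq [seq x <- t | (x < 5)%N] by exact: filter_uniq.
  have : forall x, x \in [seq x <- t | (x < 5)%N] -> ((x < 5)%N /\ x \in t).
    by move=> x; rewrite mem_filter => /andP.
  case: [seq x <- t | (x < 5)%N] => [|x [|y [|z w]]] //= hm.
  have [hx tx] := hm x (mem_head _ _).
  have [hy ty] : (y < 5)%N /\ y \in t by apply: hm; rewrite !inE eqxx orbT.
  have [hz tz] : (z < 5)%N /\ z \in t by apply: hm; rewrite !inE eqxx !orbT.
  move=> /andP [hx' /andP [hy' _]].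
  have nxy : x != y by apply: contraNneq hx' => ->; exact: mem_head.
  have nxz : x != z by apply: contraNneq hx' => ->; rewrite !inE eqxx orbT.
  have nyz : y != z by apply: contraNneq hy' => ->; exact: mem_head.
  have a1 := hcl x y tx ty nxy; have a2 := hcl y z ty tz nyz; have a3 := hcl x z tx tz nxz.
  move: a1 a2 a3; rewrite /adjL hx hy hz /= => a1 a2 a3.
  by case: (c5_tri hx hy hz a1 a2 a3).
have c2 : (count (predC (fun x => x < 5)%N) t <= p - 2)%N.
  rewrite -size_filter -(size_iota 5 (p - 2)); apply: uniq_leq_size.
    exact: filter_uniq.
  move=> x; rewrite mem_filter mem_iota /= => /andP [h1 h2].
  have := hlt x h2; move: h1; rewrite -leqNgt. lia.
lia.
Qed.

Lemma Fg_Bfree n p q : (3 <= p)%N -> (1 <= q)%N ->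
  ~ contains_subgraph (@B_adj p q) (Fg n p).
Proof.
move=> hp hq [f [finj fhom]].
pose q0 : 'I_q := Ordinal hq.
pose D := inr q0 :: [seq inl i | i <- enum 'I_p] : seq ('I_p + 'I_q)%type.
have hD : forall a b, a \in D -> b \in D -> a != b -> B_adj a b.
  move=> [a|a] [b|b] //=.
  all: try by move=> _ _ h; apply/eqP => e; move: h; rewrite e eqxx.
  rewrite !inE => /orP [/eqP ha|/mapP [? _ //]] /orP [/eqP hb|/mapP [? _ //]].
  by rewrite ha hb eqxx.
pose t := [seq lab p (f a) | a <- D].
have ht : forall a b, a \in D -> b \in D -> a != b -> adjL (lab p (f a)) (lab p (f b)).
  by move=> a b ha hb hab; apply: (fhom a b); exact: hD.
have hs : size t = p.+1 by rewrite /t size_map /= size_map size_enum_ord.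
suff : (p.+1 <= p)%N by rewrite ltnn.
rewrite -hs; apply: label_clique => //.
- rewrite map_inj_in_uniq.
    rewrite /D /= map_inj_uniq ?enum_uniq; last by move=> ? ? [].
    rewrite andbT; by apply/mapP => [[? _]].
  move=> a b ha hb heq; apply/eqP; apply/negPn/negP => hab.
  by have := ht a b ha hb hab; rewrite heq adjL_irr.
- move=> x y /mapP [a ha ->] /mapP [b hb ->] hxy; apply: ht => //.
  by apply: contra hxy => /eqP ->.
- move=> x /mapP [a _ ->]; rewrite /lab; case: ifP => h; first by lia.
  have := ltn_pmod (f a) (ltn_trans (isT : 0 < 2)%N hp). lia.
Qed.

Lemma card_small n : (#|[set u : 'I_n | (u < 3)%N]| <= 3)%N.
Proof.
have := @leq_card_in _ _ (fun u : 'I_n => (inord u : 'I_3)) [set u : 'I_n | (u < 3)%N].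
rewrite card_ord; apply => x y; rewrite !inE => hx hy /(congr1 (@nat_of_ord _)).
rewrite !inordK // => h; exact: val_inj.
Qed.

Lemma card_res n p r : (0 < p)%N -> (#|[set u : 'I_n | u %% p == r]| <= n %/ p + 1)%N.
Proof.
move=> hp.
have := @leq_card_in _ _ (fun u : 'I_n => (inord (u %/ p) : 'I_(n %/ p).+1)) [set u : 'I_n | u %% p == r].
rewrite card_ord addn1; apply => x y; rewrite !inE => /eqP hx /eqP hy /(congr1 (@nat_of_ord _)).
have hb : forall u : 'I_n, (u %/ p <= n %/ p)%N by move=> u; apply: leq_div2r; exact: ltnW.
rewrite !inordK ?ltnS ?hb // => h; apply: val_inj.
by rewrite /= (divn_eq x p) (divn_eq y p) h hx hy.
Qed.

Lemma deg_Fg n p (i : 'I_n) : (3 <= p)%N -> (3 <= i)%N ->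
  (n <= deg (Fg n p) i + 3 + (n %/ p + 1))%N.
Proof.
move=> hp hi.
set S3 := [set u : 'I_n | (u < 3)%N]; set Rr := [set u : 'I_n | u %% p == i %% p].
set Z := [set u : 'I_n | Fg n p i u].
have hsub : [set: 'I_n] \subset (S3 :|: Rr) :|: Z.
  apply/subsetP => u _; rewrite !inE.
  case: (ltnP u 3) => //= hu; case: (boolP (u %% p == i %% p)) => hr; first by [].
  rewrite /= /Fg (lab_big _ hu) (lab_big _ hi); apply: adjL_parts; by rewrite eq_sym.
have := subset_leq_card hsub; rewrite cardsT card_ord => h1.
have := cardsUI (S3 :|: Rr) Z; have := cardsUI S3 Rr.
have := card_small n; have := @card_res n p (i %% p) (ltn_trans (isT : 0 < 2)%N hp).
rewrite -/S3 -/Rr /deg -/Z; clearbody S3 Rr Z; move: (n %/ p) h1 => k h1; move: h1; move: #|S3 :|: Rr :|: Z| => a. move: #|S3 :|: Rr| => b; move: #|S3 :&: Rr| #|(S3 :|: Rr) :&: Z| #|Z| #|S3| #|Rr| => c1 c2 c3 c4 c5. lia.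
Qed.

Section Edges.
Local Open Scope ring_scope.

Lemma divn_ler (R : realType) n p : (0 < p)%N -> (n %/ p)%:R <= n%:R / p%:R :> R.
Proof.
move=> hp; rewrite ler_pdivlMr ?ltr0n // -natrM ler_nat; exact: leq_divM.
Qed.

Lemma Fg_edges (R : realType) n p : (3 <= p)%N ->
  n%:R ^+ 2 - n%:R ^+ 2 / p%:R - 7 * n%:R <= 2 * (n_edges (Fg n p))%:R :> R.
Proof.
move=> hp.
have -> : 2 * (n_edges (Fg n p))%:R = (ds (Fg n p) setT)%:R :> R.
  by rewrite -n_edges_ds ?natrM //; exact: Fg_simple.
have hp0 : (0 < p)%N by lia.
have hnp := divn_ler R n hp0.
have hdeg : forall v : 'I_n, n%:R - 4 - n%:R / p%:R - (nat_of_bool (v < 3)%N)%:R * n%:R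
      <= (dU (Fg n p) setT v)%:R :> R.
  move=> v; rewrite -deg_dU; case: (ltnP v 3) => hv /=.
    rewrite mul1r; apply: le_trans (ler0n _ _).
    have : 0 <= n%:R / p%:R :> R by apply: divr_ge0; exact: ler0n.
    have : 0 <= n%:R :> R by exact: ler0n.
    set a := n%:R / p%:R; set b := (n%:R : R); clearbody a b; move=> *; lra.
  have := deg_Fg hp hv; rewrite -(ler_nat R) !natrD => h.
  rewrite mul0r subr0; move: h hnp.
  set a := n%:R / p%:R; set b := (n%:R : R); set c := ((n %/ p)%:R : R); set d := ((deg (Fg n p) v)%:R : R).
  clearbody a b c d; move=> *; lra.
have h : \sum_(v in [set: 'I_n]) (n%:R - 4 - n%:R / p%:R - (nat_of_bool (v < 3)%N)%:R * n%:R)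
   <= \sum_(v in [set: 'I_n]) (dU (Fg n p) setT v)%:R :> R.
  by apply: ler_sum => v _; exact: hdeg v.
rewrite /ds natr_sum; apply: le_trans h.
rewrite !big_split /= !sumrN !sumr_const !cardsT !card_ord -mulr_suml -[n%:R *+ n]mulr_natr -[4 *+ n]mulr_natr -[n%:R / p%:R *+ n]mulr_natr.
have hs : \sum_(i in [set: 'I_n]) (nat_of_bool (i < 3)%N)%:R <= 3 :> R.
  rewrite -natr_sum.
  have : (\sum_(i in [set: 'I_n]) nat_of_bool (i < 3)%N <= 3)%N.
    apply: leq_trans (card_small n); rewrite card_set_sum big_mkcond /=.
    apply: leq_sum => i _; by rewrite inE.
  by rewrite -(ler_nat R).
have hn0 : 0 <= n%:R :> R by exact: ler0n.
have : (\sum_(i in [set: 'I_n]) (nat_of_bool (i < 3)%N)%:R) * n%:R <= 3 * n%:R :> R.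
  exact: ler_wpM2r.
rewrite [n%:R / p%:R * n%:R]mulrC expr2 -mulrA.
set sm := \sum_(i in _) _; set N := n%:R; set Y := N / p%:R; set NN := N * N; set NY := N * Y.
clearbody sm N Y NN NY => h3; lra.
Qed.
End Edges.

Section Arith.
Local Open Scope ring_scope.

Lemma arith1 (R : realType) (nn kk e a ds0 ds1 : R) :
  0 <= a -> a <= 1 -> 0 < e -> e < 1 -> e * nn < kk -> kk <= e * nn + 1 -> kk <= nn ->
  0 <= nn -> 10 < e ^+ 3 * nn ->
  a * nn ^+ 2 - 7 * nn <= ds0 -> ds0 <= ds1 + 2 * (kk * ((a - 5 * e) * nn)) ->
  4 * e ^+ 2 * nn ^+ 2 <= ds1 - (a + e ^+ 2) * (nn - kk) ^+ 2 - (a + e ^+ 2) * (nn - kk).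
Proof.
move=> a0 a1 e0 e1 k1 k2 k3 n0 big h0 h1.
have e20 : 0 <= e ^+ 2 by exact: exprn_ge0 (ltW e0).
have he2 : e ^+ 2 <= e by rewrite expr2; apply: ler_piMl; lra.
have he3 : e ^+ 3 <= e ^+ 2 by rewrite exprS; apply: ler_piMl; lra.
have en : 10 < e * nn.
  have : e ^+ 3 * nn <= e * nn by apply: ler_wpM2r => //; lra.
  lra.
have e2n : 10 < e ^+ 2 * nn.
  have : e ^+ 3 * nn <= e ^+ 2 * nn by apply: ler_wpM2r => //; lra.
  lra.
have kk0 : 0 <= kk by have := mulr_ge0 (ltW e0) n0; lra.
have E : ds1 - (a + e ^+ 2) * (nn - kk) ^+ 2 - (a + e ^+ 2) * (nn - kk) >=
   a * nn ^+ 2 - 7 * nn - 2 * (kk * ((a - 5 * e) * nn)) - (a + e ^+ 2) * (nn - kk) ^+ 2 - (a + e ^+ 2) * (nn - kk).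
  lra.
have F : a * nn ^+ 2 - 7 * nn - 2 * (kk * ((a - 5 * e) * nn)) - (a + e ^+ 2) * (nn - kk) ^+ 2 - (a + e ^+ 2) * (nn - kk)
   = - 7 * nn + 10 * e * kk * nn - a * kk ^+ 2 - e ^+ 2 * (nn - kk) ^+ 2 - (a + e ^+ 2) * (nn - kk).
  ring.
have G1 : a * kk ^+ 2 <= kk ^+ 2.
  rewrite -{2}(mul1r (kk ^+ 2)); apply: ler_wpM2r => //; exact: sqr_ge0.
have G2 : e ^+ 2 * (nn - kk) ^+ 2 <= e ^+ 2 * nn ^+ 2.
  apply: ler_wpM2l; first exact: sqr_ge0.
  rewrite ler_sqr ?nnegrE; lra.
have G3 : (a + e ^+ 2) * (nn - kk) <= 2 * nn.
  have he : e ^+ 2 <= 1 by lra. have : (a + e ^+ 2) * (nn - kk) <= 2 * (nn - kk) by apply: ler_wpM2r; lra.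
  lra.
have G4 : e * nn * (9 * e * nn - 1) <= kk * (10 * e * nn - kk).
  have : e * nn * (9 * e * nn - 1) <= kk * (9 * e * nn - 1).
    apply: ler_wpM2r; lra.
  have : kk * (9 * e * nn - 1) <= kk * (10 * e * nn - kk).
    apply: ler_wpM2l; lra.
  lra.
have G5 : 10 * nn <= 4 * (e ^+ 2 * nn ^+ 2).
  have : 10 * nn <= (e ^+ 2 * nn) * nn by apply: ler_wpM2r; lra.
  move=> h; have -> : 4 * (e ^+ 2 * nn ^+ 2) = 4 * ((e ^+ 2 * nn) * nn) by ring.
  have : 0 <= nn by []. lra.
have G6 : e * nn <= nn.
  rewrite -{2}(mul1r nn); apply: ler_wpM2r; lra.
move: E; rewrite F => E.
have X : kk * (10 * e * nn - kk) = 10 * e * kk * nn - kk ^+ 2 by ring.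
have Y : e * nn * (9 * e * nn - 1) = 9 * (e ^+ 2 * nn ^+ 2) - e * nn by ring.
rewrite X Y in G4.
have -> : 4 * e ^+ 2 * nn ^+ 2 = 4 * (e ^+ 2 * nn ^+ 2) by ring.
move: E G1 G2 G3 G4 G5 G6.
set A := e ^+ 2 * nn ^+ 2; set B := 10 * e * kk * nn; set C := kk ^+ 2; set D := a * kk ^+ 2.
set Ee := e ^+ 2 * (nn - kk) ^+ 2; set Ff := (a + e ^+ 2) * (nn - kk).
move=> *; rewrite -/A; lra.
Qed.

Lemma arith2 (R : realType) (uu e nn c dsu : R) : 0 <= uu -> 0 <= c -> 0 < e -> 0 <= nn ->
  dsu <= uu ^+ 2 -> 4 * e ^+ 2 * nn ^+ 2 <= dsu - c * uu ^+ 2 - c * uu -> 2 * e * nn <= uu.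
Proof.
move=> u0 c0 e0 n0 h1 h2.
have : 0 <= c * uu ^+ 2 by apply: mulr_ge0 => //; exact: sqr_ge0.
have : 0 <= c * uu by apply: mulr_ge0.
move=> h3 h4.
have h5 : (2 * e * nn) ^+ 2 <= uu ^+ 2.
  have -> : (2 * e * nn) ^+ 2 = 4 * e ^+ 2 * nn ^+ 2 by ring.
  lra.
move: h5; rewrite ler_sqr ?nnegrE //.
apply: mulr_ge0 => //; apply: mulr_ge0; lra.
Qed.

Lemma arith3 (R : realType) (p : nat) (e uu nn q : R) : (3 <= p)%N -> 0 < e -> 0 <= nn ->
  2 * e * nn <= uu -> q + 10 < e ^+ 3 * nn ->
  q <= uu * (1 - p%:R * (1 - ((p%:R - 1) / p%:R + e ^+ 2))).
Proof.
move=> hp e0 n0 hu hq.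
have p0 : p%:R != 0 :> R by rewrite pnatr_eq0; case: p hp.
have -> : 1 - p%:R * (1 - ((p%:R - 1) / p%:R + e ^+ 2)) = p%:R * e ^+ 2 :> R by field.
have hp3 : 3 <= p%:R :> R by rewrite (ler_nat R 3).
have e2 : 0 <= e ^+ 2 by exact: sqr_ge0.
have h1 : 2 * e * nn * (p%:R * e ^+ 2) <= uu * (p%:R * e ^+ 2).
  apply: ler_wpM2r => //; apply: mulr_ge0 => //; lra.
have h2 : 2 * e * nn * (3 * e ^+ 2) <= 2 * e * nn * (p%:R * e ^+ 2).
  apply: ler_wpM2l; first by apply: mulr_ge0 => //; lra.
  by apply: ler_wpM2r.
have h3 : 2 * e * nn * (3 * e ^+ 2) = 6 * (e ^+ 3 * nn) by ring.
have : 0 <= e ^+ 3 * nn by apply: mulr_ge0 => //; apply: exprn_ge0; lra.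
lra.
Qed.

Lemma arith4 (R : realType) (p i : nat) (e uu : R) : (i < p)%N -> 0 < uu ->
  0 < uu * (1 - i%:R * (1 - ((p%:R - 1) / p%:R + e ^+ 2))).
Proof.
move=> hi u0; apply: mulr_gt0 => //.
have pp : 0 < p%:R :> R by rewrite ltr0n; exact: leq_ltn_trans (leq0n i) hi.
have p0 : p%:R != 0 :> R by exact: lt0r_neq0.
have -> : 1 - i%:R * (1 - ((p%:R - 1) / p%:R + e ^+ 2)) = (p%:R - i%:R) / p%:R + i%:R * e ^+ 2 :> R
  by field.
have : 0 < (p%:R - i%:R) / p%:R :> R.
  apply: divr_gt0 => //; rewrite subr_gt0 ltr_nat //.
have : 0 <= i%:R * e ^+ 2 :> R by apply: mulr_ge0; [exact: ler0n | exact: sqr_ge0].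
lra.
Qed.
End Arith.

Unset Implicit Arguments.
Local Open Scope ring_scope.
Theorem lemma3p2 (R : realType) (p q : nat) (eta : R) :
  (3 <= p)%N -> (1 <= q)%N -> 0 < eta -> eta < 1 / (7 * (p ^ 5 * q)%:R) ->
  exists N : nat, forall (n : nat) (G : rel 'I_n), (N <= n)%N ->
    in_calG p q G ->
    (forall F : rel 'I_n, in_calG p q F -> (mindeg G <= mindeg F)%N) ->
    (#|[set v : 'I_n | (deg G v)%:R <= ((p%:R - 1) / p%:R - 5 * eta) * n%:R]|%:R
       <= eta * n%:R).
Proof.
move=> hp hq he hes.
have e1 : eta < 1.
  apply: (lt_le_trans hes); rewrite ler_pdivrMr ?mul1r.
    rewrite -natrM (ler_nat R 1) !muln_gt0 (ltn_trans _ hp) ?hq //.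
  rewrite -natrM ltr0n !muln_gt0 (ltn_trans _ hp) ?hq //.
set B := (q%:R + 10) / eta ^+ 3.
have e30 : 0 < eta ^+ 3 by exact: exprn_gt0.
have B0 : 0 <= B by apply: divr_ge0; [have := ler0n R q; lra | exact: ltW].
exists (Num.Def.archi_bound B + 2 * p)%N.
move=> n G hn [[hGs [hchi hBf]] hmax] _.
have hnB : B < n%:R.
  apply: (lt_le_trans (archi_boundP B0)); rewrite ler_nat; lia.
have hbig : q%:R + 10 < eta ^+ 3 * n%:R.
  by move: hnB; rewrite /B ltr_pdivrMr // mulrC.
have h2p : (2 * p <= n)%N by lia.
set a := (p%:R - 1) / p%:R : R.
set S := [set v | _].
rewrite leNgt; apply/negP => hS.
have hn0 : (0 < n)%N by lia.
have nn0 : 0 <= n%:R :> R by exact: ler0n.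
have pp : 0 < p%:R :> R by rewrite ltr0n; lia.
have a0 : 0 <= a by apply: divr_ge0 => //; rewrite subr_ge0 (ler_nat R 1); lia.
have a1 : a <= 1 by rewrite /a ler_pdivrMr // mul1r; lra.
have exP : exists k, (eta * n%:R < k%:R) by exists #|S|.
case: (ex_minnP exP) => k hk kmin.
have kS : (k <= #|S|)%N := kmin _ hS.
have k1 : k%:R <= eta * n%:R + 1.
  case: k hk kmin {kS} => [|k'] hk kmin.
    have : 0 <= eta * n%:R by apply: mulr_ge0 => //; exact: ltW.
    lra.
  rewrite leNgt; apply/negP => h.
  have : eta * n%:R < k'%:R by rewrite -natr1 in h; lra.
  by move/kmin; rewrite ltnn.
have Sn : (#|S| <= n)%N by have := max_card S; rewrite card_ord.
set S' := [set x in take k (enum S)].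
have cS' : #|S'| = k.
  rewrite cardsE; move/card_uniqP: (take_uniq k (enum_uniq (mem S))) => ->.
  by rewrite size_take -cardE; case: ltngtP kS => // ->.
have S'S : forall x, x \in S' -> x \in S.
  by move=> x; rewrite inE => /mem_take; rewrite mem_enum.
have hF : (n_edges (Fg n p) <= n_edges G)%N.
  apply: hmax; split; first exact: Fg_simple.
  split; [exact: Fg_chi | exact: Fg_Bfree].
have hFe := Fg_edges R n hp.
have ds0 : a * n%:R ^+ 2 - 7 * n%:R <= (ds G setT)%:R.
  rewrite -n_edges_ds // natrM.
  have : 2 * (n_edges (Fg n p))%:R <= 2 * (n_edges G)%:R :> R.
    by rewrite ler_pM2l // ler_nat.
  have -> : a * n%:R ^+ 2 = n%:R ^+ 2 - n%:R ^+ 2 / p%:R.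
    rewrite /a; field; exact: lt0r_neq0.
  move=> h; exact: le_trans hFe h.
have ds1 : (ds G setT)%:R <= (ds G (~: S'))%:R + 2 * (k%:R * ((a - 5 * eta) * n%:R)).
  have := ds_remove setT S' hGs; rewrite setTD setTI -(ler_nat R) natrD natrM.
  move=> h; apply: (le_trans h); rewrite lerD2l ler_pM2l // natr_sum -cS'.
  rewrite mulr_natl -sumr_const; apply: ler_sum => t ht.
  have := S'S t ht; rewrite inE -deg_dU; exact.
set c := a + eta ^+ 2.
have hnk : #|~: S'|%:R = n%:R - k%:R :> R.
  have h := cardsC S'; rewrite card_ord cS' in h.
  have -> : n%:R = (k + #|~: S'|)%:R :> R by rewrite h.
  by rewrite natrD [k%:R + _]addrC addrK.
have kn : k%:R <= n%:R :> R by rewrite ler_nat; exact: leq_trans kS Sn.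
have t10 : 10 < eta ^+ 3 * n%:R by apply: le_lt_trans hbig; rewrite lerDr ler0n.
have Phi0 : 4 * eta ^+ 2 * n%:R ^+ 2 <= Phi G c (~: S').
  have := arith1 a0 a1 he e1 hk k1 kn nn0 t10 ds0 ds1.
  by rewrite /Phi hnk.
have [U' [_ hU'1 hU'2]] := mindeg_sub hGs Phi0.
set uu := #|U'|%:R : R.
have dsU : (ds G U')%:R <= uu ^+ 2.
  rewrite /uu expr2 -natrM ler_nat /ds.
  have : (\sum_(v in U') dU G U' v <= \sum_(v in U') #|U'|)%N.
    apply: leq_sum => v _; rewrite /dU -sum1_card; apply: leq_sum => u _; by case: (G v u).
  by rewrite sum_nat_const.
have c0 : 0 <= c by rewrite /c; apply: addr_ge0 => //; exact: sqr_ge0.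
have hu2 := arith2 (ler0n R #|U'|) c0 he nn0 dsU hU'1.
have uu0 : 0 < uu.
  apply: lt_le_trans hu2; apply: mulr_gt0; last by rewrite ltr0n.
  by apply: mulr_gt0.
have [s [hs hsu hsub hcl hW]] := greedy (j := p) hGs hU'2 (fun i hi => arith4 eta hi uu0).
have x0 : 'I_n := Ordinal hn0.
apply: hBf; apply: (contains_B x0 hGs hs hsu hcl (W := [set u in U' | all (fun x => G x u) s])).
  rewrite -(ler_nat R); apply: le_trans hW.
  exact: (arith3 (nn := n%:R) hp he nn0 hu2 hbig).
by move=> w; rewrite inE => /andP [].
Qed.
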